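(* Let $q$ be a prime power. For $i=1,2$, let $\mathcal{C}_i$ be an $[n,k_i,d_i]_q$ linear code with generator matrix $G_i$, and let $\mathcal{C}=\{(\mathbf{u},\mathbf{u}+\mathbf{v}):\ \mathbf{u}\in\mathcal{C}_1,\ \mathbf{v}\in\mathcal{C}_2\}\subseteq\mathbb{F}_q^{2n}$. Then: 1) $\mathcal{C}$ is a $[2n,k_1+k_2,\min\{2d_1,d_2\}]_q$ linear code with generator matrix $\begin{pmatrix} G_1 & G_1\\ O_{k_2\times n} & G_2\end{pmatrix}$. 2) (Euclidean case) Let $l_2=\dim(\mathrm{Hull}_E(\mathcal{C}_2))$. If $q=2^m$ for some $m$, or $\mathcal{C}_1$ is Euclidean self-orthogonal, then $$2\dim(\mathcal{C}_1\cap\mathcal{C}_2^{\perp_E})+l_2-k_1\le \dim(\mathrm{Hull}_E(\mathcal{C}))\le 2\dim(\mathcal{C}_1\cap\mathcal{C}_2^{\perp_E})+k_2-k_1;$$ moreover, if in addition $\mathcal{C}_2$ is Euclidean self-orthogonal, then $\dim(\mathrm{Hull}_E(\mathcal{C}))=2\dim(\mathcal{C}_1\cap\mathcal{C}_2^{\perp_E})+k_2-k_1$. 3) (Hermitian case, $q$ an even power of a prime) Let $l_2=\dim(\mathrm{Hull}_H(\mathcal{C}_2))$. If $q=2^m$ for some $m$, or $\mathcal{C}_1$ is Hermitian self-orthogonal, then $$2\dim(\mathcal{C}_1\cap\mathcal{C}_2^{\perp_H})+l_2-k_1\le \dim(\mathrm{Hull}_H(\mathcal{C}))\le 2\dim(\mathcal{C}_1\cap\mathcal{C}_2^{\perp_H})+k_2-k_1;$$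 moreover, if in addition $\mathcal{C}_2$ is Hermitian self-orthogonal, then $\dim(\mathrm{Hull}_H(\mathcal{C}))=2\dim(\mathcal{C}_1\cap\mathcal{C}_2^{\perp_H})+k_2-k_1$.
   Context: An $[n,k,d]_q$ code is a $k$-dimensional subspace of $\mathbb{F}_q^n$ with minimum Hamming distance $d$. Euclidean inner product $(\mathbf{x},\mathbf{y})_E=\sum_i x_iy_i$; when $q=p^h$ with $h$ even, Hermitian inner product $(\mathbf{x},\mathbf{y})_H=\sum_i x_iy_i^{\sqrt q}$. $\mathcal{C}^{\perp_E},\mathcal{C}^{\perp_H}$ are the corresponding duals, $\mathrm{Hull}_E(\mathcal{C})=\mathcal{C}\cap\mathcal{C}^{\perp_E}$, $\mathrm{Hull}_H(\mathcal{C})=\mathcal{C}\cap\mathcal{C}^{\perp_H}$. A code is Euclidean (resp. Hermitian) self-orthogonal if $\mathcal{C}\subseteq\mathcal{C}^{\perp_E}$ (resp. $\mathcal{C}\subseteq\mathcal{C}^{\perp_H}$). *)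

(* Defs.v *)
(* linear codes over a finite field F as row spaces of matrices. *)
From HB Require Import structures.
From mathcomp Require Import all_boot all_order all_algebra.
Set Implicit Arguments. Unset Strict Implicit. Unset Printing Implicit Defensive.
Import Order.TTheory GRing.Theory Num.Theory.
Local Open Scope ring_scope.

Section Codes.
Variable F : finFieldType.

Definition hdist n (u v : 'rV[F]_n) : nat := #|[set i : 'I_n | u 0 i != v 0 i]|.

Definition min_dist m n (C : 'M[F]_(m, n)) (d : nat) : Prop :=
  (exists u v : 'rV[F]_n, [/\ (u <= C)%MS, (v <= C)%MS, u != v & hdist u v = d]) /\
  (forall u v : 'rV[F]_n, (u <= C)%MS -> (v <= C)%MS -> u != v -> (d <= hdist u v)%N).

Definition edual m n (C : 'M[F]_(m, n)) : 'M[F]_n := kermx C^T.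

(* Hermitian dual, for the conjugation x |-> x ^+ r (r = sqrt q):
   {x | (x, c)_H = sum_i x_i c_i^r = 0 for every row c of C}. *)
Definition hconj m n (r : nat) (C : 'M[F]_(m, n)) : 'M[F]_(m, n) :=
  map_mx (fun x => x ^+ r) C.
Definition hdual m n (r : nat) (C : 'M[F]_(m, n)) : 'M[F]_n := kermx (hconj r C)^T.

Definition hullE m n (C : 'M[F]_(m, n)) : 'M[F]_n := (C :&: edual C)%MS.
Definition hullH m n (r : nat) (C : 'M[F]_(m, n)) : 'M[F]_n := (C :&: hdual r C)%MS.

Definition self_orthE m n (C : 'M[F]_(m, n)) : bool := (C <= edual C)%MS.
Definition self_orthH m n (r : nat) (C : 'M[F]_(m, n)) : bool := (C <= hdual r C)%MS.

End Codes.

(* Main.v *)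
Require Import Defs.
From HB Require Import structures.
From mathcomp Require Import all_boot all_order all_algebra.
From mathcomp Require Import zify finfield.
Import Order.TTheory GRing.Theory Num.Theory.
Local Open Scope ring_scope.
Set Implicit Arguments. Unset Strict Implicit. Unset Printing Implicit Defensive.
Section RankBlocks.
Variable F : fieldType.

Lemma rank_blk_le k1 k2 (Q : 'M[F]_(k1,k2)) (R : 'M[F]_(k2,k1)) (S : 'M[F]_(k2,k2)) :
  (\rank (block_mx 0 Q R S) <= \rank Q + \rank R + \rank S)%N.
Proof.
rewrite block_mxEv -addsmxE.
apply: leq_trans (mxrank_adds_leqif _ _) _.
rewrite rank_row_0mx -addnA leq_add2l.
rewrite -mxrank_tr tr_row_mx -addsmxE.
by apply: leq_trans (mxrank_adds_leqif _ _) _; rewrite !mxrank_tr.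
Qed.

Lemma rank_blk_ge k1 k2 (Q : 'M[F]_(k1,k2)) (R : 'M[F]_(k2,k1)) (S : 'M[F]_(k2,k2)) :
  (\rank Q + \rank R <= \rank (block_mx 0 Q R S))%N.
Proof.
set M := block_mx 0 Q R S.
pose P : 'M[F]_(k1 + k2, k1) := col_mx 1%:M 0.
rewrite -(mxrank_mul_ker M P) [X in (_ <= X)%N]addnC leq_add //.
  rewrite -(rank_row_0mx k1 Q); apply: mxrankS; rewrite sub_capmx; apply/andP; split.
    by rewrite /M block_mxEv -addsmxE addsmxSl.
  by rewrite sub_kermx /P mul_row_col mul0mx mulmx0 addr0.
by rewrite /M /P mul_block_col !mulmx0 !mulmx1 !addr0 rank_col_0mx.
Qed.
End RankBlocks.

Section Gen.
Variables (F : fieldType) (f : F -> F).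
Hypotheses (f0 : f 0 = 0) (fD : {morph f : x y / x + y}) (f1 : f 1 = 1)
  (fM : {morph f : x y / x * y}) (fK : involutive f).

HB.instance Definition _ := GRing.isNmodMorphism.Build F F f (f0, fD).
HB.instance Definition _ := GRing.isMonoidMorphism.Build F F f (f1, fM).

Local Notation "A ^f" := (map_mx f A).
Definition Dl m n (A : 'M[F]_(m,n)) : 'M[F]_n := kermx (A^f)^T.

Lemma mapK m n (A : 'M[F]_(m,n)) : (A^f)^f = A.
Proof. by apply/matrixP => i j; rewrite !mxE fK. Qed.

Lemma D_sub m1 m2 n (A : 'M[F]_(m1,n)) (B : 'M[F]_(m2,n)) :
  (A <= B)%MS -> (Dl B <= Dl A)%MS.
Proof.
case/submxP => X ->; apply/sub_kermxP.
by rewrite map_mxM trmx_mul mulmxA mulmx_ker mul0mx.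
Qed.

Lemma D_eq m1 m2 n (A : 'M[F]_(m1,n)) (B : 'M[F]_(m2,n)) :
  (A :=: B)%MS -> (Dl A :=: Dl B)%MS.
Proof. by move=> e; apply/eqmxP; rewrite !D_sub ?e. Qed.

Lemma main_gen n k1 k2 m (G1 : 'M[F]_(k1,n)) (G2 : 'M[F]_(k2,n)) (C : 'M[F]_(m, n+n)) :
 row_free G1 -> row_free G2 -> (block_mx G1 G1 0 G2 :=: C)%MS ->
 (G1 *m (G1^f)^T) *+ 2 = 0 ->
 let a := \rank (G1 :&: Dl G2) in let l2 := \rank (G2 :&: Dl G2) in
 let h := \rank (C :&: Dl C) in
 [/\ (2*a + l2 <= h + k1)%N, (h + k1 <= 2*a + k2)%N &
     (G2 *m (G2^f)^T = 0 -> (h + k1 = 2*a + k2)%N)].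
Proof.
move=> fr1 fr2 eqC P2 a l2 h.
set G := block_mx G1 G1 0 G2.
have rG : \rank G = (k1 + k2)%N.
  have e1 : G = block_mx G1 0 0 G2 *m block_mx 1%:M 1%:M 0 1%:M.
    by rewrite /G mulmx_block !mulmx0 !mul0mx !mulmx1 !addr0 !add0r.
  have e2 : block_mx G1 0 0 G2 = G *m block_mx 1%:M (- 1%:M) 0 1%:M.
    rewrite /G mulmx_block !mulmx0 !mul0mx !mulmx1 !addr0 mulmxN mulmx1 addNr.
    by rewrite add0r.
  apply/eqP; rewrite eqn_leq; apply/andP; split.
    exact: rank_leq_row.
  rewrite -{1}(eqP fr1) -{1}(eqP fr2) -rank_diag_block_mx e2; exact: mxrankM_maxl.
have hE : h = \rank (G :&: Dl G).
  by rewrite /h; apply/eqmx_rank/eqmxP/cap_eqmx; [apply/eqmx_sym | apply/D_eq/eqmx_sym].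
set Q := G1 *m (G2^f)^T; set R := G2 *m (G1^f)^T; set S := G2 *m (G2^f)^T.
have eM : G *m (G^f)^T = block_mx 0 Q R S.
  rewrite /G map_block_mx map_mx0 tr_block_mx trmx0 mulmx_block.
  by rewrite !mulmx0 !mul0mx !add0r -mulr2n P2.

have rR : \rank R = \rank Q.
  have -> : R = (Q^f)^T.
    by rewrite /Q /R map_mxM -map_trmx mapK trmx_mul trmxK.
  by rewrite mxrank_tr mxrank_map.
have hM := mxrank_mul_ker G (G^f)^T; rewrite eM -/(Dl G) -hE rG in hM.
have aM := mxrank_mul_ker G1 (G2^f)^T; rewrite -/(Dl G2) -/a -/Q (eqP fr1) in aM.
have lM := mxrank_mul_ker G2 (G2^f)^T; rewrite -/(Dl G2) -/l2 -/S (eqP fr2) in lM.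
have le1 := rank_blk_le Q R S; have ge1 := rank_blk_ge Q R S.
have S0r : S = 0 -> \rank S = 0%N by move->; rewrite mxrank0.
rewrite rR in le1 ge1.
move: hM aM lM le1 ge1 S0r; clear -a.
move: (\rank (block_mx _ _ _ _)) (\rank Q) (\rank S) => x y z.
clearbody a l2 h.
move=> H1 H2 H3 H4 H5 H6; split; [lia | lia | ]. move=> /H6; lia.
Qed.
End Gen.
Section P1.
Variable F : finFieldType.

Lemma hdistE n (u v : 'rV[F]_n) : hdist u v = (\sum_(i < n) (u 0%R i != v 0%R i))%N.
Proof.
rewrite /hdist -sum1_card big_mkcond /=; apply: eq_bigr => i _.
by rewrite inE; case: (u 0%R i != v 0%R i).
Qed.

Lemma hdist_row n (a b c d : 'rV[F]_n) :
  hdist (row_mx a b) (row_mx c d) = (hdist a c + hdist b d)%N.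
Proof.
by rewrite !hdistE big_split_ord /=; congr (_ + _)%N; apply: eq_bigr => i _;
  rewrite ?row_mxEl ?row_mxEr.
Qed.

Lemma hdist_addr n (a c b : 'rV[F]_n) : hdist (a + b) (c + b) = hdist a c.
Proof.
rewrite !hdistE; apply: eq_bigr => i _; rewrite !mxE.
by rewrite (inj_eq (addIr _)).
Qed.

Lemma hdist_tri n (a b c d : 'rV[F]_n) :
  (hdist b d <= hdist a c + hdist (a + b) (c + d))%N.
Proof.
rewrite !hdistE -big_split /=; apply: leq_sum => i _; rewrite !mxE.
case: (eqVneq (a 0%R i) (c 0%R i)) => [->|_] /=.
  by rewrite (inj_eq (addrI _)) add0n.
by case: (_ != _); case: (_ != _).
Qed.

Lemma sub_blockP n k1 k2 (G1 : 'M[F]_(k1,n)) (G2 : 'M[F]_(k2,n)) (w : 'rV[F]_(n+n)) :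
  (w <= block_mx G1 G1 0 G2)%MS <-> exists u v : 'rV[F]_n,
        [/\ (u <= G1)%MS, (v <= G2)%MS & w = row_mx u (u + v)].
Proof.
split.
  case/submxP => x ->; rewrite -[x]hsubmxK mul_row_block mulmx0 addr0.
  by exists (lsubmx x *m G1), (rsubmx x *m G2); rewrite !submxMl.
case=> u [v [/submxP[x ->] /submxP[y ->] ->]].
apply/submxP; exists (row_mx x y).
by rewrite mul_row_block mulmx0 addr0.
Qed.

Lemma row_mx_neq n (a b c d : 'rV[F]_n) :
  (row_mx a b != row_mx c d) = (a != c) || (b != d).
Proof.
apply/idP/idP.
  by apply: contraR; rewrite negb_or !negbK => /andP[/eqP-> /eqP->].
apply: contraL => /eqP /eq_row_mx [-> ->]; by rewrite !eqxx.
Qed.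

Lemma min_dist_uu n k1 k2 m d1 d2 (G1 : 'M[F]_(k1,n)) (G2 : 'M[F]_(k2,n))
  (C : 'M[F]_(m, n + n)) :
  min_dist G1 d1 -> min_dist G2 d2 ->
  (forall w : 'rV[F]_(n + n),
     (w <= C)%MS <-> exists u v : 'rV[F]_n,
        [/\ (u <= G1)%MS, (v <= G2)%MS & w = row_mx u (u + v)]) ->
  min_dist C (minn (2 * d1) d2).
Proof.
move=> [[u1 [u2 [s1 s2 n12 h12]]] L1] [[v1 [v2 [t1 t2 m12 g12]]] L2] HC.
split.
  case: (leqP (2 * d1) d2) => hd.
    exists (row_mx u1 (u1 + 0)), (row_mx u2 (u2 + 0)); split.
    - by apply/HC; exists u1, 0; rewrite sub0mx.
    - by apply/HC; exists u2, 0; rewrite sub0mx.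
    - by rewrite row_mx_neq n12.
    - by rewrite hdist_row hdist_addr h12; lia.
  exists (row_mx 0 (0 + v1)), (row_mx 0 (0 + v2)); split.
  - by apply/HC; exists 0, v1; rewrite sub0mx.
  - by apply/HC; exists 0, v2; rewrite sub0mx.
  - by rewrite row_mx_neq !add0r m12 orbT.
  - by rewrite hdist_row !add0r g12 /hdist; rewrite (_ : [set i | _] = set0) ?cards0;
      [lia | apply/setP => i; rewrite !inE eqxx].
move=> w1 w2 /HC [a [b [sa sb ->]]] /HC [c [d [sc sd ->]]] ne.
rewrite hdist_row.
case: (eqVneq b d) => [eb | nbd].
  subst d; rewrite hdist_addr.
  have nac : a != c by move: ne; rewrite row_mx_neq => /orP[] //; rewrite (inj_eq (addIr _)).
  have := L1 a c sa sc nac; lia.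
have := L2 b d sb sd nbd; have := hdist_tri a b c d; lia.
Qed.
End P1.
Lemma rank_G (F : fieldType) n k1 k2 (G1 : 'M[F]_(k1,n)) (G2 : 'M[F]_(k2,n)) :
  row_free G1 -> row_free G2 -> \rank (block_mx G1 G1 0 G2) = (k1 + k2)%N.
Proof.
move=> fr1 fr2; set G := block_mx G1 G1 0 G2.
have e2 : block_mx G1 0 0 G2 = G *m block_mx 1%:M (- 1%:M) 0 1%:M.
  rewrite /G mulmx_block !mulmx0 !mul0mx !mulmx1 !addr0 mulmxN mulmx1 addNr.
  by rewrite add0r.
apply/eqP; rewrite eqn_leq; apply/andP; split; first exact: rank_leq_row.
rewrite -{1}(eqP fr1) -{1}(eqP fr2) -rank_diag_block_mx e2; exact: mxrankM_maxl.
Qed.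

Lemma char2_mx (F : finFieldType) e m n (A : 'M[F]_(m,n)) : #|F| = (2^e)%N -> A *+ 2 = 0.
Proof.
move=> cF; have c2 : (2 \in [pchar F])%N by apply: (card_finPcharP cF).
by rewrite -scaler_nat (pcharf0 c2) scale0r.
Qed.

Unset Implicit Arguments.
Theorem theorem2 (F : finFieldType) (n k1 k2 d1 d2 : nat)
    (G1 : 'M[F]_(k1, n)) (G2 : 'M[F]_(k2, n))
    (m : nat) (C : 'M[F]_(m, n + n)) :
  (* C_i is an [n, k_i, d_i]_q code with generator matrix G_i *)
  row_free G1 -> row_free G2 -> min_dist G1 d1 -> min_dist G2 d2 ->
  (* the row space of C is exactly {(u, u + v) : u in C_1, v in C_2} *)
  (forall w : 'rV[F]_(n + n),
     (w <= C)%MS <-> exists u v : 'rV[F]_n,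
        [/\ (u <= G1)%MS, (v <= G2)%MS & w = row_mx u (u + v)]) ->
  (* 1) *)
  let G : 'M[F]_(k1 + k2, n + n) := block_mx G1 G1 0 G2 in
  [/\ \rank C = (k1 + k2)%N, min_dist C (minn (2 * d1) d2),
      row_free G & (G == C)%MS]
  /\
  (* 2) Euclidean case *)
  (((exists e : nat, #|F| = (2 ^ e)%N) \/ self_orthE G1) ->
     let a := \rank (G1 :&: edual G2)%MS in
     let l2 := \rank (hullE G2) in
     let h := \rank (hullE C) in
     ((2 * a + l2)%:Z - k1%:Z <= h%:Z <= (2 * a + k2)%:Z - k1%:Z)
     /\ (self_orthE G2 -> h%:Z = (2 * a + k2)%:Z - k1%:Z))
  /\
  (* 3) Hermitian case: q = p^h with h even, conjugation x |-> x^(p^(h/2)) *)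
  (forall p h : nat, prime p -> #|F| = (p ^ h)%N -> ~~ odd h ->
     let r := (p ^ h./2)%N in
     ((exists e : nat, #|F| = (2 ^ e)%N) \/ self_orthH r G1) ->
     let a := \rank (G1 :&: hdual r G2)%MS in
     let l2 := \rank (hullH r G2) in
     let hh := \rank (hullH r C) in
     ((2 * a + l2)%:Z - k1%:Z <= hh%:Z <= (2 * a + k2)%:Z - k1%:Z)
     /\ (self_orthH r G2 -> hh%:Z = (2 * a + k2)%:Z - k1%:Z)).
Proof.
move=> fr1 fr2 md1 md2 HC G.
have GC : (G :=: C)%MS.
  apply/eqmxP/andP; split; apply/rV_subP => w.
    by move/sub_blockP/HC.
  by move/HC/sub_blockP.
have rG := rank_G fr1 fr2.
split; [split|split].
- by rewrite -GC rG.
- exact: min_dist_uu md1 md2 HC.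
- by rewrite /row_free rG.
- exact/eqmxP.
- move=> hyp a l2 h.
  have P2 : (G1 *m (map_mx idfun G1)^T) *+ 2 = 0.
    case: hyp => [[e cF]|so]; first exact: char2_mx cF.
    by move: so; rewrite /self_orthE /edual sub_kermx map_mx_id // => /eqP->; rewrite mul0rn.
  have := @main_gen F idfun (erefl _) (fun _ _ => erefl _) (erefl _) (fun _ _ => erefl _)
     (fun _ => erefl _) n k1 k2 m G1 G2 C fr1 fr2 GC P2.
  rewrite /Dl !map_mx_id // -/(edual G2) -/(edual C) -/(hullE G2) -/(hullE C) -/a -/l2 -/h.
  case=> H1 H2 H3; split.
    apply/andP; split; lia.
  by rewrite /self_orthE /edual sub_kermx => /eqP S0; have := H3 S0; lia.
- move=> p hp pr cF ev r hyp a l2 hh.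
  have pc : (p \in [pchar F])%N := card_finPcharP cF pr.
  have rpos : (0 < r)%N by rewrite expn_gt0 prime_gt0.
  pose f := fun x : F => x ^+ r.
  have f0 : f 0 = 0 by rewrite /f expr0n; case: (r) rpos.
  have fD : {morph f : x y / x + y}.
    move=> x y; apply: exprDn_pchar.
    by rewrite pnatX (pnatE _ pr) pc.
  have f1 : f 1 = 1 by rewrite /f expr1n.
  have fM : {morph f : x y / x * y} by move=> x y; rewrite /f exprMn.
  have fK : involutive f.
    have e : (r * r)%N = #|F|.
      by rewrite /r -expnD addnn cF; congr (p ^ _)%N; rewrite -[RHS]odd_double_half (negbTE ev).
    by move=> x; rewrite /f -exprM e expf_card.
  have P2 : (G1 *m (map_mx f G1)^T) *+ 2 = 0.
    case: hyp => [[e cF2]|so]; first exact: char2_mx cF2.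
    by move: so; rewrite /self_orthH /hdual sub_kermx => /eqP->; rewrite mul0rn.
  have := @main_gen F f f0 fD f1 fM fK n k1 k2 m G1 G2 C fr1 fr2 GC P2.
  rewrite /Dl -/(hdual r G2) -/(hdual r C) -/(hullH r G2) -/(hullH r C) -/a -/l2 -/hh.
  case=> H1 H2 H3; split.
    apply/andP; split; lia.
  by rewrite /self_orthH /hdual sub_kermx => /eqP S0; have := H3 S0; lia.
Qed.
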